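(* For all integers $k\ge2$ and $n\ge1$, \[ k\sum_{i=1}^{n}\bigl(\sigma(i)+\sigma_o(i)\bigr)(-1)^{n-i}r_k(n-i)=(-1)^{n+1}n\,r_k(n). \]
   Context: $r_k(m)$ is the number of $(x_1,\dots,x_k)\in\mathbb{Z}^k$ with $x_1^2+\dots+x_k^2=m$; in particular $r_k(0)=1$. $\sigma(i)$ is the sum of positive divisors of $i$ and $\sigma_o(i)$ the sum of odd positive divisors of $i$. *)

(* Defs.v *)
From mathcomp Require Import all_boot all_order all_algebra.
Set Implicit Arguments. Unset Strict Implicit. Unset Printing Implicit Defensive.
Import Order.TTheory GRing.Theory Num.Theory.

Definition sigma (i : nat) : nat := \sum_(d <- divisors i) d.
Definition sigma_o (i : nat) : nat := \sum_(d <- divisors i | odd d) d.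

Definition shiftv (k m : nat) (v : {ffun 'I_k -> 'I_(2 * m + 1)}) (j : 'I_k) : int :=
  (nat_of_ord (v j))%:Z - m%:Z.

(* r_k(m) = #{ x in Z^k | x_1^2 + ... + x_k^2 = m }.  Any solution has
   |x_j| <= m, so it suffices to count over the box [-m, m]^k. *)
Definition r (k m : nat) : nat :=
  #|[set v : {ffun 'I_k -> 'I_(2 * m + 1)} |
      (\sum_(j < k) (shiftv v j) ^+ 2 == m%:Z)%R]|.

(* Main.v *)
Require Import Defs.
From mathcomp Require Import all_boot all_order all_algebra.
From mathcomp Require Import zify ring.
Import Order.TTheory GRing.Theory Num.Theory.
Set Implicit Arguments. Unset Strict Implicit. Unset Printing Implicit Defensive.
Local Open Scope ring_scope.

Fixpoint tri (k : nat) : nat := match k with 0 => 0 | k'.+1 => (tri k' + k')%N end.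
Lemma tri2 k : (2 * tri k = k * k.-1)%N.
Proof. elim: k => [|k IH] //=. case: k IH => [|k] /= IH; lia. Qed.

Section Gauss.
Variable R : comPzRingType.

Fixpoint gb (t : R) (N k : nat) : R :=
  match N, k with
  | _, 0 => 1
  | 0, _.+1 => 0
  | N'.+1, k'.+1 => gb t N' k' + t ^+ k'.+1 * gb t N' k'.+1
  end.

Lemma gb_big t N k : (N < k)%N -> gb t N k = 0.
Proof.
elim: N k => [|N IH] [|k] //= H.
by rewrite !IH ?mulr0 ?addr0 // ltnW.
Qed.

Lemma qbin N (t x y : R) :
  \prod_(j < N) (y + x * t ^+ j) =
  \sum_(k < N.+1) gb t N k * t ^+ tri k * x ^+ k * y ^+ (N - k).
Proof.
elim: N x => [|N IH] x.
  by rewrite big_ord0 big_ord1 /= !mulr1.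
rewrite big_ord_recl /= expr0 mulr1.
have -> : \prod_(i < N) (y + x * t ^+ (lift ord0 i)) = \prod_(i < N) (y + (x * t) * t ^+ i).
  by apply: eq_bigr => i _; rewrite /= exprS mulrA.
rewrite IH mulrDl !big_distrr /=.
rewrite [in RHS]big_ord_recl /= subn0 !mulr1.
have E1 : forall k : 'I_(N.+1), gb t N.+1 (bump 0 k) * t ^+ tri (bump 0 k) * x ^+ bump 0 k * y ^+ (N.+1 - bump 0 k)
   = gb t N k * t ^+ tri k * (x * t) ^+ k * y ^+ (N - k) * x  +
     gb t N k.+1 * t ^+ tri k.+1 * (x*t) ^+ k.+1 * y ^+ (N - k).
  move=> k; rewrite /bump /= add1n /= subSS.
  rewrite /= !exprD !exprMn !exprS; ring.
rewrite (eq_bigr _ (fun k _ => E1 k)) big_split /= addrC addrA.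
congr (_ + _); last by apply: eq_bigr => k _; ring.
rewrite big_ord_recl /= subn0 expr0 !mulr1 mul1r.
congr (_ + _); first by rewrite (_ : gb t N 0 = 1) ?mul1r ?exprS //; case: N {IH E1}.
rewrite big_ord_recr /= gb_big // !mul0r addr0.
apply: eq_bigr => k _.
rewrite /bump /= !add0n.
have -> : (N - k = (N - k.+1).+1)%N by case: k => k /= Hk; lia.
rewrite !exprS !exprMn; ring.
Qed.

Definition poch (t : R) N := \prod_(j < N) (1 - t ^+ j.+1).
Lemma pochS t N : poch t N.+1 = poch t N * (1 - t ^+ N.+1).
Proof. by rewrite /poch big_ord_recr. Qed.

Lemma gb_poch t N k : (k <= N)%N -> gb t N k * poch t k * poch t (N - k) = poch t N.
Proof.
elim: N k => [|N IH] [|k] //=.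
- by rewrite /poch !big_ord0 !mulr1.
- by move=> _; rewrite subn0 /poch big_ord0 !mul1r.
move=> Hk; rewrite ltnS in Hk; rewrite subSS.
have -> : (gb t N k + t ^+ k.+1 * gb t N k.+1) * poch t k.+1 * poch t (N - k) =
  (1 - t ^+ k.+1) * (gb t N k * poch t k * poch t (N - k)) + t ^+ k.+1 * (gb t N k.+1 * poch t k.+1 * poch t (N - k)).
  by rewrite pochS; ring.
rewrite IH //.
case: (ltnP k N) => Hkn.
- have -> : (N - k = (N - k.+1).+1)%N by lia.
  rewrite [poch t (N - k.+1).+1]pochS.
  have -> : gb t N k.+1 * poch t k.+1 * (poch t (N - k.+1) * (1 - t ^+ (N - k.+1).+1))
     = (1 - t ^+ (N - k.+1).+1) * (gb t N k.+1 * poch t k.+1 * poch t (N - k.+1)) by ring.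
  rewrite IH // mulrA mulrBr mulr1 -exprD.
  have -> : (k.+1 + (N - k.+1).+1 = N.+1)%N by lia.
  rewrite pochS; ring.
- have -> : k = N by lia.
  by rewrite gb_big // !mul0r mulr0 addr0 pochS mulrC.
Qed.
End Gauss.

Notation P := ({poly int}).
Definition cong (M : nat) (p q : P) := exists h : P, p = q + 'X^M * h.

Lemma cong_refl M p : cong M p p.
Proof. by exists 0; rewrite mulr0 addr0. Qed.
Lemma cong_sym M p q : cong M p q -> cong M q p.
Proof. by case=> h ->; exists (- h); rewrite mulrN addrK. Qed.
Lemma cong_trans M p q s : cong M p q -> cong M q s -> cong M p s.
Proof. by case=> h -> [h' ->]; exists (h' + h); rewrite mulrDr addrA. Qed.
Lemma congD M p q p' q' : cong M p q -> cong M p' q' -> cong M (p + p') (q + q').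
Proof. by case=> h -> [h' ->]; exists (h + h'); ring. Qed.
Lemma congN M p q : cong M p q -> cong M (- p) (- q).
Proof. by case=> h ->; exists (- h); ring. Qed.
Lemma congMl M p q s : cong M p q -> cong M (s * p) (s * q).
Proof. by case=> h ->; exists (s * h); ring. Qed.
Lemma congMr M p q s : cong M p q -> cong M (p * s) (q * s).
Proof. by case=> h ->; exists (h * s); ring. Qed.
Lemma congM M p q p' q' : cong M p q -> cong M p' q' -> cong M (p * p') (q * q').
Proof. move=> H1 H2; apply: cong_trans (congMr _ H1) (congMl _ H2). Qed.
Lemma cong_Xn M a p : (M <= a)%N -> cong M ('X^a * p) 0.
Proof. by move=> H; exists ('X^(a - M) * p); rewrite add0r mulrA -exprD subnKC. Qed.
Lemma cong_coef M p q i : cong M p q -> (i < M)%N -> p`_i = q`_i.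
Proof. by case=> h -> Hi; rewrite coefD coefXnM Hi addr0. Qed.
Lemma cong_sum M (I : Type) (s : seq I) (F G : I -> P) :
  (forall i, cong M (F i) (G i)) -> cong M (\sum_(i <- s) F i) (\sum_(i <- s) G i).
Proof.
move=> H; apply: (big_ind2 (cong M)); [exact: cong_refl | | by move=> i _].
by move=> ? ? ? ? ; apply: congD.
Qed.

Definition D (p : P) := 'X * p^`().
Lemma DM p q : D (p * q) = D p * q + p * D q.
Proof. by rewrite /D derivM; ring. Qed.
Lemma D_cong M p q : cong M.+1 p q -> cong M.+1 (D p) (D q).
Proof.
case=> h ->; rewrite /D derivD derivM derivXn /=.
exists (h *+ M.+1 + 'X * h^`()).
rewrite -[h *+ _]mulr_natl -['X^_ *+ _]mulr_natl exprS; ring.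
Qed.


Definition Le (e M : nat) : P := \sum_(s < M) e%:R * 'X^(e * s.+1).
Lemma Le_fac e M : Le e M * (1 - 'X^e) = e%:R * 'X^e - e%:R * 'X^(e * M.+1).
Proof.
elim: M => [|M IH]; first by rewrite /Le big_ord0 mul0r muln1 subrr.
rewrite /Le big_ord_recr /= mulrDl -/(Le e M) IH.
rewrite (_ : (e * M.+2 = e * M.+1 + e)%N); last by lia.
rewrite exprD; ring.
Qed.
Lemma fac_cong e M : (0 < e)%N -> cong M (D (1 - 'X^e)) (- Le e M * (1 - 'X^e)).
Proof.
move=> He.
rewrite mulNr Le_fac /D derivB derivC derivXn sub0r mulrN -mulr_natl mulrCA -exprS prednK //.
exists (- (e%:R * 'X^(e * M.+1 - M))).
rewrite mulrN mulrCA -exprD subnKC; last by nia.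
ring.
Qed.

Definition Qs (es : seq nat) : P := \prod_(e <- es) (1 - 'X^e).
Definition Ls (es : seq nat) M : P := \sum_(e <- es) Le e M.
Lemma Qs_cong es M : all (fun e => 0 < e)%N es -> cong M (D (Qs es)) (- Ls es M * Qs es).
Proof.
elim: es => [|e es IH] /=.
  rewrite /Qs /Ls !big_nil /D derivC mulr0 oppr0 mul0r.
  by move=> _; exact: cong_refl.
case/andP=> He Hes.
rewrite /Qs /Ls !big_cons -/(Qs es) -/(Ls es M) DM.
have H1 := congMr (Qs es) (fac_cong M He).
have H2 := congMl (1 - 'X^e) (IH Hes).
apply: cong_trans (congD H1 H2) _.
rewrite (_ : - Le e M * (1 - 'X^e) * Qs es + (1 - 'X^e) * (- Ls es M * Qs es) =
  - (Le e M + Ls es M) * ((1 - 'X^e) * Qs es)); first exact: cong_refl.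
ring.
Qed.

Lemma pow_cong M (T L : P) k : cong M.+1 (D T) (- L * T) ->
  cong M.+1 (D (T ^+ k)) (- (L *+ k) * T ^+ k).
Proof.
move=> H; elim: k => [|k IH].
  by rewrite expr0 /D derivC mulr0 mulr0n oppr0 mul0r; exact: cong_refl.
rewrite exprS DM.
apply: cong_trans (congD (congMr _ H) (congMl T IH)) _.
rewrite mulrSr; rewrite (_ : - L * T * T ^+ k + T * (- (L *+ k) * T ^+ k) =
   - (L + L *+ k) * (T * T ^+ k)); first by rewrite addrC; exact: cong_refl.
ring.
Qed.

Definition tX : P := 'X^2.

Lemma one_cong_mul c (p q : P) : (exists h, p = 1 + 'X^c * h) -> (exists h, q = 1 + 'X^c * h) ->
  exists h, p * q = 1 + 'X^c * h.
Proof. by case=> h -> [h' ->]; exists (h + h' + 'X^c * h * h'); ring. Qed.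

Lemma prod1 a lo hi : (a <= lo)%N ->
  exists h, \prod_(lo <= j < hi) (1 - tX ^+ j.+1) = 1 + 'X^(2 * a.+1) * h.
Proof.
move=> Ha; rewrite big_seq.
apply: (big_ind (fun p => exists h : P, p = 1 + 'X^(2 * a.+1) * h)).
- by exists 0; rewrite mulr0 addr0.
- by move=> x y; apply: one_cong_mul.
move=> j; rewrite mem_index_iota => /andP [Hj _].
exists (- 'X^(2 * j.+1 - 2 * a.+1)).
rewrite /tX -exprM mulrN -exprD subnKC //; lia.
Qed.

Lemma poch_split (R : comPzRingType) (t : R) a b : poch t (a + b) = poch t b * \prod_(b <= j < a + b) (1 - t ^+ j.+1).
Proof.
by rewrite /poch -!(big_mkord xpredT (fun j => 1 - t ^+ j.+1)) (big_cat_nat (leq0n b) (leq_addl a b)).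
Qed.

Lemma poch_split' (R : comPzRingType) (t : R) a n : (a <= n)%N -> poch t n = poch t a * \prod_(a <= j < n) (1 - t ^+ j.+1).
Proof.
move=> H.
by rewrite /poch -!(big_mkord xpredT (fun j => 1 - t ^+ j.+1)) (big_cat_nat (leq0n a) H).
Qed.

Lemma poch_neq0 n : poch tX n != 0.
Proof.
apply/negP => /eqP H.
have : (poch tX n).[0] = 1.
  rewrite /poch horner_prod; apply: big1 => j _.
  by rewrite hornerD hornerN hornerC /tX -exprM hornerXn expr0n /= subr0.
by rewrite H horner0 => /eqP; rewrite eq_sym oner_eq0.
Qed.

Lemma gbpoch_cong a b n (G : P) : G * poch tX a * poch tX b = poch tX (a + b) ->
  (a <= n)%N -> (n <= b)%N -> exists h, G * poch tX n = 1 + 'X^(2 * a.+1) * h.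
Proof.
move=> E Ha Hb.
rewrite poch_split [_ * poch tX b]mulrC in E.
have E2 := mulfI (poch_neq0 b) E.
rewrite (poch_split' _ Ha) mulrA E2.
apply: one_cong_mul; apply: prod1 => //; lia.
Qed.

Definition Pp n : P := \prod_(i < n) (1 - 'X^((2 * i).+1)).
Definition dk n k := ((k - n) ^ 2 + (n - k) ^ 2)%N.

Lemma tri2' k : (2 * tri k = k * (k - 1))%N.
Proof. by rewrite tri2; case: k => //= k; rewrite subn1. Qed.

Lemma sum2j n : (\sum_(0 <= j < n) (2 * j) = 2 * tri n)%N.
Proof.
elim: n => [|n IH]; first by rewrite big_geq.
by rewrite big_nat_recr //= IH; lia.
Qed.

Lemma Lside n : \prod_(j < 2 * n) ('X^(2 * n - 1) + (-1) * tX ^+ j) =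
  (-1) ^+ n * 'X^(2 * tri n + (2 * n - 1) * n) * (Pp n * Pp n).
Proof.
rewrite -(big_mkord xpredT (fun j => 'X^(2 * n - 1) + (-1) * tX ^+ j)).
rewrite (big_cat_nat (leq0n n) (_ : n <= 2 * n)%N); last by lia.
have E1 : \prod_(0 <= j < n) ('X^(2 * n - 1) + (-1) * tX ^+ j) =
   \prod_(0 <= j < n) ((-1) * 'X^(2 * j)) * \prod_(0 <= j < n) (1 - 'X^((2 * (n - j.+1)).+1)).
  rewrite -big_split; apply: eq_big_nat => j /andP [_ Hj] /=.
  rewrite /tX -exprM -mulrA mulrBr mulr1 -exprD.
  have -> : (2 * j + (2 * (n - j.+1)).+1 = 2 * n - 1)%N by lia.
  ring.
have E2 : \prod_(n <= j < 2 * n) ('X^(2 * n - 1) + (-1) * tX ^+ j) =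
   \prod_(0 <= j < n) ('X^(2 * n - 1)) * \prod_(0 <= j < n) (1 - 'X^((2 * j).+1)).
  rewrite -{1}(add0n n) big_addn -big_split.
  have -> : (2 * n - n = n)%N by lia.
  apply: eq_big_nat => j /andP [_ Hj] /=.
  rewrite /tX -exprM mulrBr mulr1 -exprD.
  have -> : (2 * n - 1 + (2 * j).+1 = 2 * (j + n))%N by lia.
  ring.
rewrite E1 E2 big_split /= prodr_const_nat prodrXr prodr_const_nat sum2j subn0.
have -> : \prod_(0 <= j < n) (1 - 'X^((2 * (n - j.+1)).+1)) = Pp n.
  rewrite big_nat_rev big_mkord /Pp; apply: eq_bigr => i _.
  congr (_ - 'X^(_)); have := ltn_ord i; lia.
rewrite big_mkord -/(Pp n).
rewrite -exprM exprD; ring.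
Qed.

Lemma tri3 k : (2 * tri k + k = k * k)%N.
Proof. elim: k => [|k IH] //=; lia. Qed.

Lemma expo n kk : (kk <= 2 * n)%N ->
  (2 * tri kk + (2 * n - 1) * (2 * n - kk) = 2 * tri n + (2 * n - 1) * n + ((kk - n) ^ 2 + (n - kk) ^ 2))%N.
Proof.
move=> Hk.
have A := tri3 kk; have B := tri3 n.
move: (2 * tri kk)%N (2 * tri n)%N A B => a b A B.
case: n Hk B => [|n] Hk B; first by case: kk Hk A => //=; lia.
have -> : (2 * n.+1 - 1 = 2 * n + 1)%N by lia.
case: (leqP n.+1 kk) => Hnk.
- have [m Em] : exists m, kk = (n.+1 + m)%N by exists (kk - n.+1)%N; lia.
  have [p Ep] : exists p, n.+1 = (m + p)%N by exists (n.+1 - m)%N; lia.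
  have -> : (2 * n.+1 - kk = p)%N by lia.
  have -> : (kk - n.+1 = m)%N by lia.
  have -> : (n.+1 - kk = 0)%N by lia.
  rewrite Em in A; nia.
- have [m Em] : exists m, n.+1 = (kk + m)%N by exists (n.+1 - kk)%N; lia.
  have -> : (2 * n.+1 - kk = n.+1 + m)%N by lia.
  have -> : (n.+1 - kk = m)%N by lia.
  have -> : (kk - n.+1 = 0)%N by lia.
  nia.
Qed.

Lemma Pid n : Pp n * Pp n =
  (-1) ^+ n * \sum_(k < (2 * n).+1) (-1) ^+ k * gb tX (2 * n) k * 'X^(dk n k).
Proof.
have Q := qbin (2 * n) tX (-1) ('X^(2 * n - 1)).
rewrite Lside in Q.
have R : \sum_(k < (2 * n).+1) gb tX (2 * n) k * tX ^+ tri k * (-1) ^+ k * 'X^(2 * n - 1) ^+ (2 * n - k)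
   = 'X^(2 * tri n + (2 * n - 1) * n) * \sum_(k < (2 * n).+1) (-1) ^+ k * gb tX (2 * n) k * 'X^(dk n k).
  rewrite big_distrr; apply: eq_bigr => k _ /=.
  rewrite /tX -!exprM.
  have Hexp : (2 * tri k + (2 * n - 1) * (2 * n - k) = 2 * tri n + (2 * n - 1) * n + dk n k)%N.
    by clear Q; rewrite expo // -ltnS.
  transitivity (gb tX (2*n) k * (-1)^+k * ('X^(2 * tri k) * 'X^((2 * n - 1) * (2 * n - k)) : P)); first by ring.
  rewrite -exprD Hexp exprD; ring.
rewrite R in Q.
rewrite [LHS](_ : _ = 'X^(2 * tri n + (2 * n - 1) * n) * ((-1) ^+ n * (Pp n * Pp n))) in Q; last by ring.
have Q2 := mulfI (monic_neq0 (monicXn _ _)) Q.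
by rewrite -Q2 signrMK.
Qed.

Definition Qn n : P := poch tX n * (Pp n * Pp n).
Definition Tn n : P := \sum_(k < (2 * n).+1) (-1) ^+ (k + n) * 'X^(dk n k).

Lemma bnd1 n k : (k < n)%N -> (n.+1 <= dk n k + 2 * k.+1)%N.
Proof.
move=> Hk; rewrite /dk; have -> : (k - n = 0)%N by lia.
have [j Ej] : exists j, n = (k + j.+1)%N by exists (n - k.+1)%N; lia.
rewrite Ej; have -> : (k + j.+1 - k = j.+1)%N by lia.
nia.
Qed.

Lemma bnd2 n k : (n <= k <= 2 * n)%N -> (n.+1 <= dk n k + 2 * (2 * n - k).+1)%N.
Proof.
move=> /andP [H1 H2]; rewrite /dk; have -> : (n - k = 0)%N by lia.
have [j Ej] : exists j, k = (n + j)%N by exists (k - n)%N; lia.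
rewrite Ej in H2 *; have -> : (n + j - n = j)%N by lia.
have -> : (2 * n - (n + j) = n - j)%N by lia.
have [i Ei] : exists i, n = (j + i)%N by exists (n - j)%N; lia.
rewrite Ei; have -> : (j + i - j = i)%N by lia.
nia.
Qed.

Lemma QT n : cong n.+1 (Qn n) (Tn n).
Proof.
rewrite /Qn Pid mulrCA big_distrr big_distrr /Tn /=.
apply: cong_sum => k.
have Hk := ltn_ord k.
have [a [h [Hh Ha]]] : exists a (h : P), gb tX (2 * n) k * poch tX n = 1 + 'X^(2 * a.+1) * h /\ (n.+1 <= dk n k + 2 * a.+1)%N.
  case: (ltnP k n) => Hkn.
  - have E : gb tX (2 * n) k * poch tX k * poch tX (2 * n - k) = poch tX (k + (2 * n - k)).
      by rewrite gb_poch ?subnKC //; lia.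
    have Hb : (n <= 2 * n - k)%N by lia.
    have [h Hh] := gbpoch_cong E (ltnW Hkn) Hb.
    exists k, h; split => //.
    exact: bnd1.
  - have E : gb tX (2 * n) k * poch tX (2 * n - k) * poch tX k = poch tX (2 * n - k + k).
      by rewrite -mulrA [poch tX _ * _]mulrC mulrA gb_poch ?subnK //; lia.
    have Hb : (2 * n - k <= n)%N by lia.
    have [h Hh] := gbpoch_cong E Hb Hkn.
    exists (2 * n - k)%N, h; split => //.
    by apply: bnd2; lia.
exists ((-1) ^+ (k + n) * 'X^(dk n k + 2 * a.+1 - n.+1) * h).
transitivity ((-1)^+(k+n) * 'X^(dk n k) * (gb tX (2*n) k * poch tX n)); first by rewrite exprD; ring.
rewrite Hh.
have -> : 'X^(n.+1) * ((-1)^+(k+n) * 'X^(dk n k + 2*a.+1 - n.+1) * h) =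
   (-1)^+(k+n) * ('X^(n.+1) * 'X^(dk n k + 2*a.+1 - n.+1)) * h by ring.
rewrite -exprD subnKC // (exprD 'X); ring.
Qed.

Lemma sig_range l B (Q : pred nat) : (0 < l)%N -> (l < B)%N ->
  (\sum_(d <- divisors l | Q d) d = \sum_(0 <= d < B | (d %| l) && Q d) d)%N.
Proof.
move=> Hl HB.
rewrite -big_filter -[RHS]big_filter.
apply: perm_big; apply: uniq_perm.
- by rewrite filter_uniq // divisors_uniq.
- by rewrite filter_uniq // iota_uniq.
move=> d; rewrite !mem_filter -dvdn_divisors // mem_iota /= add0n.
case H: (d %| l)%N; last by rewrite andbF.
rewrite andbT subn0 (_ : (d < B)%N = true) ?andbT //; have := dvdn_leq Hl H; lia.
Qed.

Lemma split_range n (f : nat -> nat) :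
  (\sum_(0 <= d < (2 * n).+1) f d = f 0 + \sum_(0 <= j < n) (f (2 * j).+1 + f (2 * j).+2))%N.
Proof.
elim: n => [|n IH]; first by rewrite muln0 big_nat1 big_geq // addn0.
have -> : ((2 * n.+1).+1 = (2 * n).+3)%N by lia.
rewrite big_nat_recr // big_nat_recr // IH big_nat_recr //=.
by rewrite !addnA.
Qed.

Definition es n := ([seq (2 * j.+1)%N | j <- iota 0 n] ++ [seq (2 * j).+1 | j <- iota 0 n] ++ [seq (2 * j).+1 | j <- iota 0 n])%N.

Lemma es_sum n l : (0 < l)%N -> (l <= n)%N ->
  (\sum_(e <- es n) e * (e %| l) = sigma l + sigma_o l)%N.
Proof.
move=> Hl Hln.
have H1 := sig_range xpredT Hl (_ : l < (2 * n).+1)%N.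
have H2 := sig_range odd Hl (_ : l < (2 * n).+1)%N.
rewrite /sigma /sigma_o H1; last by lia.
rewrite H2; last by lia.
rewrite [X in (X + _)%N]big_mkcond [X in (_ + X)%N]big_mkcond /=.
rewrite !split_range /= dvd0n (_ : (l == 0) = false); last by lia.
rewrite /es !big_cat /= !big_map.
rewrite /index_iota subn0 -!big_split /=.

apply: eq_bigr => j _.
rewrite oddM /= ?andbF ?andbT.
have -> : (2 * j.+1 = (2 * j).+2)%N by lia.
by case: ((2 * j).+2 %| l)%N; case: ((2 * j).+1 %| l)%N; rewrite /= ?muln0 ?muln1 ?addn0 ?add0n; lia.
Qed.

Lemma cnt M c : \sum_(s < M) ((c == s.+1)%:R : int) = (((0 < c) && (c <= M))%N)%:R.
Proof.
elim: M => [|M IH]; first by rewrite big_ord0; case: c.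
rewrite big_ord_recr IH.
case: c IH => [|c] IH; first by [].
change ((((0 < c.+1) && (c.+1 <= M))%N)%:R + ((c.+1 == M.+1)%N)%:R = (((0 < c.+1) && (c.+1 <= M.+1))%N)%:R :> int).
rewrite eqSS ltn0Sn !andTb ltnS; case: (ltngtP c M) => H.
- by rewrite ?addr0 ?add0r.
- by rewrite ?addr0 ?add0r.
- by rewrite ?addr0 ?add0r.
Qed.

Lemma Le_coef e M l : (0 < e)%N -> (l <= M)%N ->
  (Le e M)`_l = ((e * ((e %| l) && (0 < l)))%N)%:R.
Proof.
move=> He HlM.
rewrite /Le coef_sum.
under eq_bigr => s _ do rewrite mulr_natl coefMn coefXn.
rewrite sumrMnl.
case Hd: ((e %| l)%N && (0 < l)%N).
- move: HlM; case/andP: Hd => /dvdnP [c ->] Hl HlM.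
  under eq_bigr => s _ do rewrite (mulnC c) eqn_pmul2l //.
  rewrite cnt (_ : ((0 < c) && (c <= M))%N = true) ?muln1 //.
  apply/andP; split; first by lia.
  by apply: leq_trans HlM; rewrite leq_pmulr.
- change (nat_of_bool false) with 0%N; rewrite muln0 big1 ?mul0rn // => s _.
  case E: (l == e * s.+1)%N => //.
  by move/eqP: E => E; rewrite E dvdn_mulr //= muln_gt0 He in Hd.
Qed.

Lemma es_pos n : all (fun e => 0 < e)%N (es n).
Proof.
apply/allP => e; rewrite !mem_cat => /or3P [] /mapP [j _ ->]; lia.
Qed.

Lemma L_coef n l : (l <= n)%N -> (Ls (es n) n.+1)`_l = (((sigma l + sigma_o l) * (0 < l))%N)%:R.
Proof.
move=> Hl.
rewrite /Ls coef_sum big_seq.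
rewrite (eq_bigr (fun e => ((e * ((e %| l) && (0 < l)))%N)%:R)); last first.
  move=> e He; apply: Le_coef; last by lia.
  by move/allP: (es_pos n) => /(_ e He).
rewrite -big_seq -natr_sum.
case: l Hl => [|l] Hl.
  by rewrite muln0 big1 // => e _; rewrite andbF muln0.
rewrite muln1 -(es_sum (n := n)) //.
by congr (_%:R); apply: eq_bigr => e _; rewrite andbT.
Qed.

Lemma DT n k : cong n.+1 (D (Tn n ^+ k)) (- (Ls (es n) n.+1 *+ k) * Tn n ^+ k).
Proof.
apply: pow_cong.
have HQ : Qs (es n) = Qn n.
  rewrite /Qs /es !big_cat !big_map /Qn /Pp /poch /=.
  have Hi : forall F : nat -> P, \prod_(j <- iota 0 n) F j = \prod_(j < n) F j.
    by move=> F; rewrite -(big_mkord xpredT) /index_iota subn0.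
  rewrite !Hi; congr (_ * _); apply: eq_bigr => j _; by rewrite /tX -exprM.
have H1 := Qs_cong (n.+1) (es_pos n).
rewrite HQ in H1.
apply: cong_trans (D_cong (cong_sym (QT n))) _.
apply: cong_trans H1 _.
exact: congMl (QT n).
Qed.

Definition cntn k B s i := #|[set v : {ffun 'I_k -> 'I_B} | (\sum_j dk s (v j) == i)%N]|.

Lemma PoszX' (a m : nat) : (((a ^ m)%N : nat) : int) = (a : int) ^+ m.
Proof. by rewrite -!natz natrX. Qed.

Lemma dkZ s a : ((dk s a)%:Z) = (a%:Z - s%:Z) ^+ 2.
Proof.
rewrite /dk; case: (leqP s a) => H.
- have -> : (s - a = 0)%N by lia.
  by rewrite addn0 PoszX' subzn.
- have -> : (a - s = 0)%N by lia.
  by rewrite add0n PoszX' -subzn ?(ltnW H) // -sqrrN opprB.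
Qed.

Lemma r_cntn k i : r k i = cntn k (2 * i).+1 i i.
Proof.
rewrite -addn1.
rewrite /r /cntn.
apply: eq_card => v; rewrite !inE.
rewrite -eqz_nat (big_morph Posz PoszD (erefl _)).
by under [in RHS]eq_bigr => j _ do rewrite dkZ.
Qed.

Lemma le_sq m : (m <= m ^ 2)%N.
Proof. case: m => // m; rewrite expnS expn1; nia. Qed.

Lemma cntn_shift k s i : (i <= s)%N -> cntn k (2 * s).+1 s i = cntn k (2 * i).+1 i i.
Proof.
move=> His.
pose phi (v : {ffun 'I_k -> 'I_(2 * i).+1}) : {ffun 'I_k -> 'I_(2 * s).+1} :=
  [ffun j => inord (v j + (s - i))].
have val_phi v j : (phi v j : nat) = (v j + (s - i))%N.
  rewrite ffunE inordK //; have := ltn_ord (v j); lia.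
have inj : injective phi.
  move=> v1 v2 E; apply/ffunP => j; apply: ord_inj.
  have := val_phi v1 j; rewrite E val_phi /=; lia.
have dk_phi v j : dk s (phi v j) = dk i (v j).
  rewrite val_phi /dk; congr (_ ^ 2 + _ ^ 2)%N; lia.
rewrite /cntn.
rewrite (_ : [set w : {ffun 'I_k -> 'I_(2 * s).+1} | (\sum_j dk s (w j))%N == i] = phi @: [set v : {ffun 'I_k -> 'I_(2 * i).+1} | (\sum_j dk i (v j))%N == i]).
  by rewrite card_imset.
apply/setP => w; rewrite inE; apply/idP/imsetP.
- move=> Hw.
  have Hb j : (dk s (w j) <= i)%N.
    by move/eqP: Hw => <-; rewrite (bigD1 j) //= leq_addr.
  have Hr j : (s - i <= w j <= s + i)%N.
    have := Hb j; rewrite /dk => H.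
    have := le_sq (w j - s); have := le_sq (s - w j); lia.
  pose v : {ffun 'I_k -> 'I_(2 * i).+1} := [ffun j => inord (w j - (s - i))].
  have Ev : w = phi v.
    apply/ffunP => j; apply: ord_inj; rewrite val_phi ffunE inordK; have := Hr j; lia.
  exists v => //.
  rewrite inE; move: Hw; rewrite Ev.
  by under eq_bigr => j _ do rewrite dk_phi.
- case=> v; rewrite inE => Hv ->.
  by under eq_bigr => j _ do rewrite dk_phi.
Qed.

Lemma odd_dk n a : odd (dk n a) = odd (a + n).
Proof.
rewrite /dk; case: (leqP n a) => H.
- have -> : (n - a = 0)%N by lia.
  rewrite addn0 oddX /= oddB // oddD; by case: (odd a); case: (odd n).
- have -> : (a - n = 0)%N by lia.
  rewrite add0n oddX /= oddB ?(ltnW H) // oddD; by case: (odd a); case: (odd n).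
Qed.

Lemma odd_sum (I : Type) (s : seq I) (F G : I -> nat) : (forall x, odd (F x) = odd (G x)) ->
  odd (\sum_(x <- s) F x) = odd (\sum_(x <- s) G x).
Proof.
move=> H; apply: (big_ind2 (fun a b => odd a = odd b)) => //.
by move=> a b c d E1 E2; rewrite !oddD E1 E2.
Qed.

Lemma prod_const_ord (T : P) k : \prod_(j < k) T = T ^+ k.
Proof. elim: k => [|k IH]; first by rewrite big_ord0. by rewrite big_ord_recr IH exprSr. Qed.

Lemma coef_sgnX a m i : (((-1) ^+ a : P) * 'X^m)`_i = (-1) ^+ a * ((i == m)%:R).
Proof.
case Ho: (odd a); rewrite -[(-1 : P) ^+ a]signr_odd -[(-1 : int) ^+ a]signr_odd Ho.
- by rewrite !expr1 mulN1r coefN coefXn mulN1r.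
- by rewrite !expr0 mul1r coefXn mul1r.
Qed.

Lemma sign_eq a b : odd a = odd b -> ((-1) ^+ a : int) = (-1) ^+ b.
Proof. by move=> H; rewrite -signr_odd H signr_odd. Qed.

Lemma Tk_coef n k i : (i <= n)%N -> (Tn n ^+ k)`_i = (-1) ^+ i * (r k i)%:Z.
Proof.
move=> Hi.
rewrite -prod_const_ord /Tn bigA_distr_bigA coef_sum.
rewrite (eq_bigr (fun f : {ffun 'I_k -> 'I_(2 * n).+1} =>
    if (\sum_j dk n (f j) == i)%N then (-1) ^+ i else 0)); last first.
  move=> f _; rewrite big_split /= !prodrXr coef_sgnX.
  case E: (\sum_j dk n (f j) == i)%N.
  - have Hp : odd (\sum_j (f j + n)) = odd i.
      by move/eqP: E => <-; apply: odd_sum => x; rewrite odd_dk.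
    by rewrite (sign_eq Hp) eq_sym E mulr1.
  - by rewrite eq_sym E mulr0.
rewrite -big_mkcond sumr_const r_cntn -(cntn_shift _ Hi) /cntn -mulr_natr natz.
congr (_ * Posz _); apply: eq_card => f; by rewrite inE.
Qed.

Unset Implicit Arguments.

Theorem mainTheorem17 (k n : nat) (hk : (2 <= k)%N) (hn : (1 <= n)%N) :
  (k%:Z * \sum_(1 <= i < n.+1)
      ((sigma i + sigma_o i)%:Z * (-1) ^+ (n - i) * (r k (n - i))%:Z)
   = (-1) ^+ n.+1 * n%:Z * (r k n)%:Z :> int).
Proof.
have H := cong_coef (DT n k) (ltnSn n).
rewrite /D coefXM (_ : (n == 0)%N = false) in H; last by lia.
rewrite coef_deriv prednK // Tk_coef // in H.
rewrite mulNr coefN coefM in H.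
have E : \sum_(j < n.+1) (Ls (es n) n.+1 *+ k)`_j * (Tn n ^+ k)`_(n - j)
   = \sum_(j < n.+1) (((sigma j + sigma_o j) * (0 < j))%N%:Z *+ k * ((-1) ^+ (n - j) * (r k (n - j))%:Z)).
  apply: eq_bigr => j _.
  have Hj := ltn_ord j.
  by rewrite coefMn L_coef ?Tk_coef //; lia.
rewrite E in H; clear E.
rewrite -(big_mkord xpredT (fun j => ((sigma j + sigma_o j) * (0 < j))%N%:Z *+ k * ((-1) ^+ (n - j) * (r k (n - j))%:Z))) in H.
rewrite big_ltn // muln0 mul0rn mul0r add0r in H.
rewrite big_distrr /=.
have E2 : \sum_(1 <= i < n.+1) k%:Z * ((sigma i + sigma_o i)%:Z * (-1) ^+ (n - i) * (r k (n - i))%:Z)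
  = \sum_(1 <= i < n.+1) ((sigma i + sigma_o i) * (0 < i))%N%:Z *+ k * ((-1) ^+ (n - i) * (r k (n - i))%:Z).
  apply: eq_big_nat => i /andP [Hi _].
  rewrite Hi muln1 -mulr_natr natz; ring.
rewrite E2 -[LHS]opprK -H.
rewrite -mulr_natr natz exprS; ring.
Qed.
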